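(* Let $X$ be a second countable locally compact Abelian group containing no nonzero compact subgroups. Let $\xi_1,\xi_2$ be independent identically distributed random variables with values in $X$ and a symmetric distribution $\mu$. Let $\alpha$ be a random variable with a Bernoulli distribution taking the values $0$ and $1$ with probability $\frac12$ each, independent of $(\xi_1,\xi_2)$. Then the following are equivalent: (i) the linear forms $2\alpha\xi_1$ and $\xi_1+\xi_2$ are identically distributed; (ii) there is $x_0\in X$ such that $\mu=\frac12\left(E_{x_0}+E_{-x_0}\right)$.
   Context: A distribution is symmetric if $\mu(B)=\mu(-B)$ for all Borel $B$. $E_x$ denotes the point mass at $x$. *)

(* Defs.v *)
From HB Require Import structures.
From mathcomp Require Import all_boot all_order all_algebra.
From mathcomp Require Import all_classical all_reals all_analysis.
Set Implicit Arguments. Unset Strict Implicit. Unset Printing Implicit Defensive.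
Import Order.TTheory GRing.Theory Num.Theory.
Local Open Scope classical_set_scope.
Local Open Scope ring_scope.

Definition borel_display {T} : set (set T) -> measure_display.
Proof. exact. Qed.

Definition borelType (X : topologicalZmodType) : Type := X.

Section borel_instance.
Variable X : topologicalZmodType.
HB.instance Definition _ := GRing.Zmodule.on (borelType X).
HB.instance Definition _ := Topological.on (borelType X).
HB.instance Definition _ := isPointed.Build (borelType X) 0.
Let G := [set U : set X | open U].
Lemma borel_sigmaC (A : set X) : <<s G >> A -> <<s G >> (~` A).
Proof. by move=> sGA; rewrite -setTD; exact: sigma_algebraCD. Qed.
HB.instance Definition _ := @isMeasurable.Build (borel_display G)
  (borelType X) <<s G >> (@sigma_algebra0 _ setT G) (@borel_sigmaC)
  (@sigma_algebra_bigcup _ setT G).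
End borel_instance.

Definition is_subgroup (X : zmodType) (K : set X) : Prop :=
  K 0 /\ (forall x y, K x -> K y -> K (x - y)).

Definition no_nonzero_compact_subgroup (X : topologicalZmodType) : Prop :=
  forall K : set X, is_subgroup K -> compact K -> K = [set 0].

Definition symmetric_measure (X : topologicalZmodType) (R : realType)
  (mu : set (borelType X) -> \bar R) : Prop :=
  forall B : set (borelType X), measurable B -> mu B = mu [set - x | x in B].

Definition independent_rv d0 d1 d2 (Omega : measurableType d0) (R : realType)
  (P : probability Omega R) (T1 : measurableType d1) (T2 : measurableType d2)
  (Y1 : Omega -> T1) (Y2 : Omega -> T2) : Prop :=
  forall (A : set T1) (B : set T2), measurable A -> measurable B ->
    P (Y1 @^-1` A `&` Y2 @^-1` B) = (P (Y1 @^-1` A) * P (Y2 @^-1` B))%E.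

Definition has_distribution d0 d (Omega : measurableType d0) (R : realType)
  (P : probability Omega R) (T : measurableType d) (Y : Omega -> T)
  (mu : set T -> \bar R) : Prop :=
  forall A : set T, measurable A -> P (Y @^-1` A) = mu A.

Definition identically_distributed d0 d (Omega : measurableType d0)
  (R : realType) (P : probability Omega R) (T : measurableType d)
  (Y1 Y2 : Omega -> T) : Prop :=
  forall A : set T, measurable A -> P (Y1 @^-1` A) = P (Y2 @^-1` A).

(* Main.v *)
Require Import Defs.
From HB Require Import structures.
From mathcomp Require Import all_boot all_order all_algebra.
From mathcomp Require Import all_classical all_reals all_analysis.
From mathcomp Require Import ring lra.
Import Order.TTheory GRing.Theory Num.Theory.
Local Open Scope classical_set_scope.
Local Open Scope ring_scope.
Set Implicit Arguments. Unset Strict Implicit. Unset Printing Implicit Defensive.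
Section PR.
Context d (T : measurableType d) (R : realType) (P : probability T R).
Definition pr (A : set T) : R := fine (P A).
Lemma prE A : measurable A -> P A = (pr A)%:E.
Proof. by move=> mA; rewrite /pr fineK // fin_num_measure. Qed.
Lemma pr_ge0 A : 0 <= pr A.
Proof. by rewrite /pr fine_ge0 // measure_ge0. Qed.
Lemma pr_le1 A : measurable A -> pr A <= 1.
Proof. by move=> mA; rewrite -lee_fin -prE // probability_le1. Qed.
Lemma prT : pr setT = 1.
Proof. by rewrite /pr probability_setT. Qed.
Lemma pr0 : pr set0 = 0.
Proof. by rewrite /pr measure0. Qed.
Lemma prU A B : measurable A -> measurable B -> A `&` B = set0 ->
  pr (A `|` B) = pr A + pr B.
Proof.
move=> mA mB AB; apply/eqP; rewrite -eqe -prE ?EFinD -?prE //; last exact: measurableU.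
by rewrite measureU.
Qed.
Lemma prU2 A B : measurable A -> measurable B -> pr (A `|` B) <= pr A + pr B.
Proof.
move=> mA mB; rewrite -lee_fin -prE ?EFinD -?prE //; last exact: measurableU.
exact: measureU2.
Qed.
Lemma pr_le A B : measurable A -> measurable B -> A `<=` B -> pr A <= pr B.
Proof.
move=> mA mB AB; rewrite -lee_fin -!prE //; apply: le_measure => //; by rewrite inE.
Qed.
Lemma prC A : measurable A -> pr (~` A) = 1 - pr A.
Proof.
move=> mA; apply/eqP; rewrite -eqe -prE ?EFinB -?prE //; last exact: measurableC.
by rewrite probability_setC.
Qed.
Lemma pr_null (F : nat -> set T) A : (forall n, measurable (F n)) ->
  (forall n, pr (F n) = 0) -> measurable A -> A `<=` \bigcup_n F n -> pr A = 0.
Proof.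
move=> mF F0 mA AF; apply/eqP; rewrite eq_le pr_ge0 andbT.
rewrite -lee_fin -prE //.
have h := @measure_sigma_subadditive _ _ _ P _ _ mF mA AF.
apply: (le_trans h); rewrite eseries0 // => i _ _ /=; by rewrite prE // F0.
Qed.
End PR.
Section Topo.
Variable X : topologicalZmodType.

Lemma base_seq : @second_countable X -> exists b : nat -> set X,
  (forall n, open (b n)) /\
  (forall x A, nbhs x A -> exists n, b n x /\ b n `<=` A).
Proof.
case=> B cB [Bo Bb].
have /pcard_surjP [g gs] := cB.
exists (fun n => if `[< B (g n) >] then g n else set0); split.
  by move=> n; case: asboolP => ?; [exact: Bo|exact: open0].
move=> x A /Bb [U [BU Ux] UA].
case: (gs U BU) => n _ gn.
exists n; case: asboolP => [?|nB]; first by rewrite gn.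
by exfalso; apply: nB; rewrite gn.
Qed.

Lemma no2tors (nc : no_nonzero_compact_subgroup X) (x : X) : x + x = 0 -> x = 0.
Proof.
move=> h.
have xN : - x = x by apply/eqP; rewrite eq_sym -subr_eq0 opprK h.
have K : is_subgroup [set 0; x].
  split; first by left.
  move=> u v [->|->] [->|->]; rewrite ?subrr ?subr0 ?sub0r ?xN; by [left|right|left|right].
have := nc _ K (finite_compact (finite_set2 _ _)).
move=> e; have h2 : [set 0; x] x by right.
by rewrite e in h2.
Qed.

Lemma opp_open (U : set X) : open U -> open [set y | U (- y)].
Proof.
move=> oU; have -> : [set y | U (- y)] = (-%R) @^-1` U by [].
by apply: open_comp => // z _; exact: opp_continuous.
Qed.

Variables (b : nat -> set X) (hbo : forall n, open (b n))
  (hbb : forall x A, nbhs x A -> exists n, b n x /\ b n `<=` A).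

Lemma sep_antisym : hausdorff_space X -> no_nonzero_compact_subgroup X ->
  forall x : X, x != 0 ->
  exists n, b n x /\ (forall y, b n y -> ~ b n (- y)).
Proof.
move=> hX nc x x0.
have xNx : x != - x.
  apply/negP => /eqP e; move/negP: x0; apply; apply/eqP; apply: no2tors => //.
  by rewrite {2}e subrr.
move: hX; rewrite open_hausdorff => /(_ _ _ xNx) [[U V] /= [xU yV] [oU oV /eqP UV]].
move: xU yV; rewrite !inE => xU yV.
have oW : open (U `&` [set y | V (- y)]) by apply: openI => //; exact: opp_open.
have : nbhs x (U `&` [set y | V (- y)]).
  by apply: open_nbhs_nbhs; split => //; split => //=; rewrite opprK.
move=> /hbb [n [bx bW]]; exists n; split => // y /bW [Uy _] /bW [_] /=.
rewrite opprK => Vy.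
by have : (U `&` V) y by [split]; rewrite UV.
Qed.
End Topo.
Section Meas.
Variable X : topologicalZmodType.
Variables (b : nat -> set X) (hbo : forall n, open (b n))
  (hbb : forall x A, nbhs x A -> exists n, b n x /\ b n `<=` A).

Lemma open_meas (U : set X) : open U -> measurable (U : set (borelType X)).
Proof. by move=> oU; apply: sub_sigma_algebra. Qed.

Lemma mpre d (O : measurableType d) d' (Y : measurableType d') (f : O -> Y) A :
  measurable_fun setT f -> measurable A -> measurable (f @^-1` A).
Proof. by move=> mf mA; rewrite -[_ @^-1` _]setTI; apply: mf. Qed.

Lemma meas_fun_open d (O : measurableType d) (f : O -> borelType X) :
  (forall U : set X, open U -> measurable (f @^-1` U)) -> measurable_fun setT f.
Proof.
move=> h; apply: (@measurability _ _ _ _ setT f (@open X)) => //.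
by move=> _ [U oU <-]; rewrite setTI; exact: h.
Qed.

Lemma meas_add d (O : measurableType d) (f g : O -> borelType X) :
  measurable_fun setT f -> measurable_fun setT g ->
  measurable_fun setT (fun w => f w + g w).
Proof.
move=> mf mg; apply: meas_fun_open => U oU.
pose S := \bigcup_n \bigcup_m
  (if `[< forall u v, b n u -> b m v -> U (u + v) >]
   then f @^-1` (b n) `&` g @^-1` (b m) else set0).
suff -> : (fun w => f w + g w) @^-1` U = S.
  apply: bigcupT_measurable => n; apply: bigcupT_measurable => m.
  case: asboolP => _; last exact: measurable0.
  by apply: measurableI; apply: mpre => //; apply: open_meas.
apply/seteqP; split.
- move=> w /= Uw.
  have nU : nbhs (f w + g w) U by apply: open_nbhs_nbhs.
  have := @add_continuous X (f w, g w) _ nU.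
  case=> [[Q1 Q2]] /= [n1 n2] QU.
  have [n [bn bnQ]] := hbb n1; have [m [bm bmQ]] := hbb n2.
  exists n => //; exists m => //.
  case: asboolP => [_|nc]; first by split.
  exfalso; apply: nc => u v bu bv.
  by apply: (QU (u, v)); split => /=; [exact: bnQ|exact: bmQ].
- move=> w [n _ [m _]]; case: asboolP => [h [bf bg]|] //.
  exact: h.
Qed.

Lemma meas_muln d (O : measurableType d) (f : O -> borelType X) k :
  measurable_fun setT f -> measurable_fun setT (fun w => f w *+ k).
Proof.
move=> mf; elim: k => [|k IH].
  have -> : (fun w => f w *+ 0) = (fun _ => 0 : borelType X).
    by apply/funext => w; rewrite mulr0n.
  exact: measurable_cst.
have -> : (fun w => f w *+ k.+1) = (fun w => f w + f w *+ k).
  by apply/funext => w; rewrite mulrS.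
exact: meas_add.
Qed.

Lemma meas_opp : measurable_fun setT (fun x : borelType X => - x).
Proof.
apply: meas_fun_open => U oU.
by apply: open_meas; exact: opp_open.
Qed.

Lemma meas_set1 (hX : hausdorff_space X) (x : X) :
  measurable ([set x] : set (borelType X)).
Proof.
rewrite -[ [set x] ]setCK; apply: measurableC; apply: open_meas.
by rewrite openC; exact: accessible_closed_set1 (hausdorff_accessible hX) x.
Qed.

Lemma meas_Y1 d (O : measurableType d) (f : O -> borelType X) (al : O -> nat) :
  measurable_fun setT f -> measurable_fun setT al ->
  measurable_fun setT (fun w => f w *+ (2 * al w)%N).
Proof.
move=> mf mal; apply: meas_fun_open => U oU.
suff -> : (fun w => f w *+ (2 * al w)%N) @^-1` U =
  \bigcup_k (al @^-1` [set k] `&` (fun w => f w *+ (2 * k)%N) @^-1` U).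
  apply: bigcupT_measurable => k; apply: measurableI.
    by apply: mpre.
  by apply: mpre; [exact: meas_muln|exact: open_meas].
apply/seteqP; split => w /=.
  by move=> h; exists (al w) => //.
by move=> [k _ [/= -> h]].
Qed.
End Meas.
Section Astar.
Variable X : topologicalZmodType.
Variables (b : nat -> set X).

Definition negS (B : set X) : set X := [set y | B (- y)].

Definition bp n : set X :=
  if `[< forall y, b n y -> ~ b n (- y) >] then b n else set0.
Definition Wn n : set X :=
  bp n `\` \bigcup_k (if (k < n)%N then bp k `|` negS (bp k) else set0).
Definition Astar : set X := \bigcup_n Wn n.

Lemma bp_anti n y : bp n y -> ~ bp n (- y).
Proof.
rewrite /bp; case: asboolP => // h; exact: h.
Qed.

Lemma Astar_anti x : Astar x -> ~ Astar (- x).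
Proof.
move=> [n _ [bx nx]] [m _ [bmx nmx]].
have [nm|mn|e] := ltngtP n m.
- apply: nmx; exists n => //; rewrite nm; right; by rewrite /negS /= opprK.
- apply: nx; exists m => //; rewrite mn; by right.
- subst m; exact: (bp_anti bx bmx).
Qed.

Lemma Astar0 : ~ Astar 0.
Proof. by move=> h; apply: (Astar_anti h); rewrite oppr0. Qed.

Lemma Astar_cover (hX : hausdorff_space X) (nc : no_nonzero_compact_subgroup X)
  (hbb : forall x A, nbhs x A -> exists n, b n x /\ b n `<=` A)
  (x : X) : x != 0 -> Astar x \/ Astar (- x).
Proof.
move=> x0.
have [n [bx ba]] := sep_antisym hbb hX nc x0.
have bpx : bp n x by rewrite /bp; case: asboolP.
have ex : exists n, `[< bp n x \/ bp n (- x) >] by exists n; apply/asboolP; left.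
case: (ex_minnP ex) => k /asboolP hk kmin.
have nk : forall j, (j < k)%N -> ~ (bp j x \/ bp j (- x)).
  move=> j jk hj; have := kmin j (asboolT hj); by rewrite leqNgt jk.
case: hk => hk.
- left; exists k => //; split => // -[j _]; case: ifP => // jk.
  move=> hj; apply: (nk j jk); case: hj => h; [by left|right; exact: h].
- right; exists k => //; split => // -[j _]; case: ifP => // jk.
  move=> hj; apply: (nk j jk); case: hj => h; [right; exact: h|left].
  by move: h; rewrite /negS /= opprK.
Qed.
End Astar.
Section Main.
Variables (R : realType) (X : topologicalZmodType)
  (d0 : measure_display) (Omega : measurableType d0) (P : probability Omega R)
  (xi1 xi2 : Omega -> borelType X) (alpha : Omega -> nat)
  (mu : probability (borelType X) R).
Hypotheses (hX : hausdorff_space X) (nc : no_nonzero_compact_subgroup X)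
  (m1 : measurable_fun setT xi1) (m2 : measurable_fun setT xi2)
  (ma : measurable_fun setT alpha)
  (d1 : has_distribution P xi1 mu) (d2 : has_distribution P xi2 mu)
  (ind12 : independent_rv P xi1 xi2) (sym : symmetric_measure mu)
  (pa0 : P (alpha @^-1` [set 0%N]) = (2^-1)%:E)
  (pa1 : P (alpha @^-1` [set 1%N]) = (2^-1)%:E)
  (inda : independent_rv P alpha (fun w => (xi1 w, xi2 w))).
Variables (b : nat -> set X) (hbo : forall n, open (b n))
  (hbb : forall x A, nbhs x A -> exists n, b n x /\ b n `<=` A).

Local Notation pm := (pr mu).
Local Notation pP := (pr P).

Lemma negS_meas (B : set X) : measurable (B : set (borelType X)) ->
  measurable (negS B : set (borelType X)).
Proof. move=> mB; exact: (mpre (@meas_opp X) mB). Qed.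

Lemma mu_negS (B : set X) : measurable (B : set (borelType X)) ->
  pm (negS B) = pm B.
Proof.
move=> mB; rewrite /pr (sym mB); congr (fine (mu _)).
apply/seteqP; split => y /=.
  by move=> h; exists (- y) => //; rewrite opprK.
by move=> [x Bx <-]; rewrite /negS /= opprK.
Qed.

Lemma pd1 A : measurable A -> pP (xi1 @^-1` A) = pm A.
Proof. by move=> mA; rewrite /pr d1. Qed.
Lemma pd2 A : measurable A -> pP (xi2 @^-1` A) = pm A.
Proof. by move=> mA; rewrite /pr d2. Qed.

Lemma prod_rule A B : measurable A -> measurable B ->
  pP (xi1 @^-1` A `&` xi2 @^-1` B) = pm A * pm B.
Proof.
move=> mA mB; apply/eqP; rewrite -eqe -prE; last first.
  by apply: measurableI; apply: mpre.
by rewrite ind12 // d1 // d2 // !prE.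
Qed.

Lemma prod_rule_a k A : measurable A ->
  pP (alpha @^-1` [set k] `&` xi1 @^-1` A) = pP (alpha @^-1` [set k]) * pm A.
Proof.
move=> mA; apply/eqP; rewrite -eqe -prE; last first.
  by apply: measurableI; apply: mpre.
have -> : xi1 @^-1` A = (fun w => (xi1 w, xi2 w)) @^-1` (A `*` setT).
  by apply/seteqP; split => w /=; [move=> h; split|case].
rewrite inda //; last exact: measurableX.
have <- : xi1 @^-1` A = (fun w => (xi1 w, xi2 w)) @^-1` (A `*` setT).
  by apply/seteqP; split => w /=; [move=> h; split|case].
by rewrite d1 // !prE //; apply: mpre.
Qed.

Definition E := (fun w => xi1 w + xi2 w) @^-1` [set 0 : borelType X].

Lemma E_meas : measurable E.
Proof. exact: (mpre (meas_add hbo hbb m1 m2) (meas_set1 hX 0)). Qed.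

Lemma K4 (B1 B2 B3 B4 : set X) :
  measurable (B1 : set (borelType X)) -> measurable (B2 : set (borelType X)) ->
  measurable (B3 : set (borelType X)) -> measurable (B4 : set (borelType X)) ->
  (forall x, B1 x \/ B2 x \/ B3 x \/ B4 x) ->
  pP E <= pm B1 * pm B1 + pm B2 * pm B2 + pm B3 * pm B3 + pm B4 * pm B4.
Proof.
move=> mB1 mB2 mB3 mB4 cov.
pose C (B : set X) := xi1 @^-1` B `&` xi2 @^-1` negS B.
have mC B : measurable (B : set (borelType X)) -> measurable (C B).
  by move=> mB; apply: measurableI; apply: mpre => //; apply: negS_meas.
have pC B : measurable (B : set (borelType X)) -> pP (C B) = pm B * pm B.
  move=> mB; rewrite /C prod_rule //; last exact: negS_meas.
  by congr (_ * _); exact: mu_negS.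
have EC : E `<=` C B1 `|` C B2 `|` C B3 `|` C B4.
  move=> w; rewrite /E /= => e.
  have e2 : xi2 w = - xi1 w by apply/eqP; rewrite -addr_eq0 addrC e.
  have hC B : B (xi1 w) -> C B w by move=> h; split => //=; rewrite /negS /= e2 opprK.
  case: (cov (xi1 w)) => [h|[h|[h|h]]].
  - by left; left; left; apply: hC.
  - by left; left; right; apply: hC.
  - by left; right; apply: hC.
  - by right; apply: hC.
apply: le_trans (pr_le _ E_meas _ EC) _.
  by repeat apply: measurableU; apply: mC.
rewrite -pC // -pC // -pC // -pC //.
apply: le_trans (prU2 _ _ _) _; first by repeat apply: measurableU; apply: mC.
  exact: mC.
rewrite lerD2r; apply: le_trans (prU2 _ _ _) _; first by repeat apply: measurableU; apply: mC.
  exact: mC.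
rewrite lerD2r; apply: prU2; exact: mC.
Qed.


Definition Y1 := fun w => xi1 w *+ (2 * alpha w)%N.
Definition Y2 := fun w => xi1 w + xi2 w.

Lemma alpha_meas k : measurable (alpha @^-1` [set k]).
Proof. exact: mpre. Qed.

Lemma set0_meas (x : X) : measurable ([set x] : set (borelType X)).
Proof. exact: meas_set1. Qed.

Lemma LB : identically_distributed P Y1 Y2 ->
  2^-1 + 2^-1 * pm [set 0] <= pP E.
Proof.
move=> idd.
have -> : pP E = pP (Y1 @^-1` [set 0]) by rewrite /pr /E idd //; exact: set0_meas.
have mF : measurable (Y1 @^-1` [set 0]).
  exact: (mpre (meas_Y1 hbo hbb m1 ma) (set0_meas 0)).
pose S1 := alpha @^-1` [set 0%N].
pose S2 := alpha @^-1` [set 1%N] `&` xi1 @^-1` [set 0].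
have mS2 : measurable S2 by apply: measurableI; [exact: alpha_meas|apply: mpre => //; exact: set0_meas].
have SF : S1 `|` S2 `<=` Y1 @^-1` [set 0].
  move=> w; rewrite /Y1 /=; case=> [->|[_ ->]]; by rewrite ?muln0 ?mulr0n ?mul0rn.
have dS : S1 `&` S2 = set0.
  apply/seteqP; split => w //=; case=> /= h1 [h2 _].
  by rewrite /= h1 in h2.
have mS1 : measurable S1 by exact: alpha_meas.
have h := pr_le P (measurableU _ _ mS1 mS2) mF SF.
apply: le_trans h.
rewrite prU //.
rewrite /S2 prod_rule_a; last exact: set0_meas.
by rewrite /pr pa1 pa0.
Qed.

Lemma bp_meas n : measurable (bp b n : set (borelType X)).
Proof. rewrite /bp; case: asboolP => _; [exact: open_meas|exact: measurable0]. Qed.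

Lemma Astar_meas : measurable (Astar b : set (borelType X)).
Proof.
apply: bigcupT_measurable => n; apply: measurableD; first exact: bp_meas.
apply: bigcupT_measurable => k; case: ifP => _; last exact: measurable0.
apply: measurableU; first exact: bp_meas.
exact: negS_meas (bp_meas k).
Qed.


Lemma pm_ge0 (A : set X) : 0 <= pm A. Proof. exact: pr_ge0. Qed.

Lemma dir1 : identically_distributed P Y1 Y2 ->
  exists x0 : borelType X, forall A : set (borelType X), measurable A ->
   mu A = ((2^-1)%R%:E * (@dirac _ _ x0 R A + @dirac _ _ (- x0)%R R A))%E.
Proof.
move=> idd.
pose A0 : set X := Astar b.
have mA0 : measurable (A0 : set (borelType X)) by exact: Astar_meas.
have mnA0 : measurable (negS A0 : set (borelType X)) by exact: negS_meas.
have m0 : measurable ([set 0] : set (borelType X)) by exact: set0_meas.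
have nA00 : ~ A0 0 by exact: Astar0.
have lb := LB idd.
have pA0N : pm (negS A0) = pm A0 by exact: mu_negS.
have hsum : pm [set 0] + 2 * pm A0 = 1.
  have e : [set 0] `|` A0 `|` negS A0 = setT.
    apply/seteqP; split => // x _.
    have [->|x0] := eqVneq x 0; first by left; left.
    case: (Astar_cover hX nc hbb x0) => h; [by left; right|by right].
  have := prT mu; rewrite -e prU //; last 2 first.
  - exact: measurableU.
  - apply/seteqP; split => // x [[->|h1] h2].
      by move: h2; rewrite /negS /= oppr0.
    exact: (Astar_anti h1 h2).
  rewrite prU //; last by apply/seteqP; split => // x [->].
  rewrite pA0N => h; lra.
have k := K4 m0 mA0 mnA0 measurable0.
have /k {}k : forall x : X, [set 0] x \/ A0 x \/ negS A0 x \/ set0 x.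
  move=> x; have [->|x0] := eqVneq x 0; first by left.
  by case: (Astar_cover hX nc hbb x0) => h; [right; left|right; right; left].
rewrite pA0N pr0 in k.
have p1 := pr_le1 mu m0; have p0 := pm_ge0 [set 0].
have a0 := pm_ge0 A0.
have : pm [set 0] * (pm [set 0] - 1) = 0 by nra.
move/eqP; rewrite mulf_eq0 subr_eq0 => /orP[/eqP pz|/eqP po].
have pA0 : pm A0 = 2^-1 by lra.
have zo : forall A : set X, measurable (A : set (borelType X)) -> A `<=` A0 ->
    pm A = 0 \/ pm A = 2^-1.
  move=> A mA sA.
  have mAD : measurable ((A0 `\` A) : set (borelType X)) by exact: measurableD.
  have k2 := K4 (measurableU _ _ mA m0) (negS_meas mA) mAD (negS_meas mAD).
  have /k2 {}k2 : forall x : X, (A `|` [set 0]) x \/ negS A x \/ (A0 `\` A) x \/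
      negS (A0 `\` A) x.
    move=> x; have [->|x0] := eqVneq x 0; first by left; right.
    case: (pselect (A0 x)) => hx.
      case: (pselect (A x)) => ha; first by left; left.
      by right; right; left; split.
    case: (Astar_cover hX nc hbb x0) => // h.
    case: (pselect (A (- x))) => ha; first by right; left.
    by right; right; right; split.
  rewrite prU // in k2; last first.
    by apply/seteqP; split => // x [Ax x0]; apply: nA00; rewrite -x0; exact: sA.
  rewrite pz addr0 (mu_negS mA) (mu_negS mAD) in k2.
  have hD : pm A0 = pm A + pm (A0 `\` A).
    rewrite -prU //; first by rewrite setDUK.
    by apply/seteqP; split => // x [Ax [_ nAx]].
  have a1 := pm_ge0 A.
  have a2 : pm A <= pm A0 by apply: pr_le.
  have : pm A * (2 * pm A - 1) = 0 by nra.
  move/eqP; rewrite mulf_eq0 => /orP[/eqP h|/eqP h]; first by left.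
  by right; lra.
pose Z n : set X := if `[< pm (b n `&` A0) = 0 >] then b n `&` A0 else set0.
have mbA n : measurable ((b n `&` A0) : set (borelType X)).
  by apply: measurableI => //; exact: open_meas.
have mZ n : measurable (Z n : set (borelType X)).
  by rewrite /Z; case: asboolP => _; [exact: mbA|exact: measurable0].
have pZ n : pm (Z n) = 0.
  by rewrite /Z; case: asboolP => // _; exact: pr0.
have [x0 [Ax0 hx0]] : exists x0, A0 x0 /\ forall n, b n x0 -> pm (b n `&` A0) != 0.
  apply: contrapT => nE.
  have : pm A0 = 0.
    apply: (pr_null mZ pZ mA0) => x Ax.
    case: (pselect (exists n, b n x /\ pm (b n `&` A0) = 0)) => [[n [bn e]]|ne].
      by exists n => //; rewrite /Z; case: asboolP.
    exfalso; apply: nE; exists x; split => // n bn; apply/eqP => e.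
    by apply: ne; exists n.
  by rewrite pA0 => /eqP; rewrite invr_eq0 pnatr_eq0.
have px0 : pm [set x0] = 2^-1.
  have mx0 : measurable ([set x0] : set (borelType X)) by exact: set0_meas.
  have mD : measurable ((A0 `\` [set x0]) : set (borelType X)) by exact: measurableD.
  have pD : pm (A0 `\` [set x0]) = 0.
    apply: (pr_null mZ pZ mD) => y [Ay ny].
    have yx : x0 != y by apply/eqP => e; apply: ny; rewrite e.
    move: (hX); rewrite open_hausdorff => /(_ _ _ yx) [[U V] /= [xU yV] [oU oV /eqP UV]].
    move: xU yV; rewrite !inE => xU yV.
    have [n [bn bnU]] := hbb (open_nbhs_nbhs (conj oU xU)).
    have [m [bm bmV]] := hbb (open_nbhs_nbhs (conj oV yV)).
    have hn : pm (b n `&` A0) = 2^-1.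
      case: (zo _ (mbA n) (@subIsetr _ _ _)) => // e.
      by move: (hx0 n bn); rewrite e eqxx.
    have hm : pm (b m `&` A0) = 0.
      case: (zo _ (mbA m) (@subIsetr _ _ _)) => // e.
      have dis : (b n `&` A0) `&` (b m `&` A0) = set0.
        apply/seteqP; split => // z [[bnz _] [bmz _]].
        have hz : (U `&` V) z by split; [exact: bnU|exact: bmV].
        by rewrite UV in hz.
      have := prU mu (mbA n) (mbA m) dis; rewrite hn e => h.
      have : pm ((b n `&` A0) `|` (b m `&` A0)) <= pm A0.
        by apply: pr_le => //; [exact: measurableU|move=> z [[_ ?]|[_ ?]]].
      rewrite h pA0; lra.
    by exists m => //; rewrite /Z; case: asboolP => // _; split.
  have dis : [set x0] `&` (A0 `\` [set x0]) = set0.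
    by apply/seteqP; split => // z [zx [_ nz]]; apply: nz.
  have := prU mu mx0 mD dis; rewrite setDUK; last by move=> z ->.
  by rewrite pD addr0 pA0 => h; rewrite h.
have mx : measurable ([set x0] : set (borelType X)) by exact: set0_meas.
have mnx : measurable ([set - x0] : set (borelType X)) by exact: set0_meas.
have pnx0 : pm [set - x0] = 2^-1.
  rewrite -px0 -(mu_negS mx); congr (pr mu _); apply/seteqP; split => z; rewrite /negS /=.
    by move=> ->; rewrite opprK.
  by move=> h; rewrite -h opprK.
have xn : x0 != - x0.
  by apply/eqP => e; apply: (Astar_anti Ax0); rewrite -e.
exists x0 => A mA; rewrite prE // !diracE -EFinD -EFinM; congr EFin.
have sA (y : X) : pm [set y] = 2^-1 -> pm (A `&` [set y]) = (y \in A)%:R * 2^-1.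
  move=> py; case: (pselect (A y)) => h.
    rewrite mem_set // mul1r -py; congr (pr mu _); apply/seteqP; split => z.
      by case.
    by move=> ->.
  rewrite memNset // mul0r.
  have -> : A `&` [set y] = set0.
    by apply/seteqP; split => // z [Az zx]; apply: h; rewrite -zx.
  exact: pr0.
have s1 := sA _ px0; have s2 := sA _ pnx0.
have dis12 : [set x0] `&` [set - x0] = set0.
  by apply/seteqP; split => // z [-> e]; move/eqP: xn; apply.
have mT2 : measurable (([set x0] `|` [set - x0]) : set (borelType X)).
  exact: measurableU.
have pT2 : pm ([set x0] `|` [set - x0]) = 1 by rewrite prU // px0 pnx0; lra.
have pC : pm (~` ([set x0] `|` [set - x0])) = 0 by rewrite prC // pT2 subrr.
have mA1 : measurable ((A `&` [set x0]) : set (borelType X)) by exact: measurableI.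
have mA2 : measurable ((A `&` [set - x0]) : set (borelType X)) by exact: measurableI.
have disA : (A `&` [set x0]) `&` (A `&` [set - x0]) = set0.
  by apply/seteqP; split => // z [[_ ->] [_ e]]; move/eqP: xn; apply.
have mU := measurableU _ _ mA1 mA2.
have lower : pm (A `&` [set x0]) + pm (A `&` [set - x0]) <= pm A.
  by rewrite -prU //; apply: pr_le => // z [[]|[]].
have upper : pm A <= pm (A `&` [set x0]) + pm (A `&` [set - x0]) +
    pm (~` ([set x0] `|` [set - x0])).
  rewrite -prU //.
  have mC : measurable ((~` ([set x0] `|` [set - x0])) : set (borelType X)).
    exact: measurableC.
  apply: le_trans (prU2 mu mU mC).
  apply: pr_le => //; first exact: measurableU.
  move=> z Az; case: (pselect (z = x0)) => [e|h1]; first by left; left; split.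
  case: (pselect (z = - x0)) => [e|h2]; first by left; right; split.
  by right; case.
rewrite s1 s2 pC in lower upper; lra.
exists 0 => A mA; rewrite prE // !diracE oppr0 -EFinD -EFinM; congr EFin.
case: (pselect (A 0)) => h.
  rewrite mem_set //=.
  have -> : pm A = 1.
    apply/eqP; rewrite eq_le pr_le1 //= -po; apply: pr_le => //; by move=> x ->.
  lra.
rewrite memNset //=.
suff -> : pm A = 0 by lra.
apply/eqP; rewrite eq_le pr_ge0 andbT.
have sub : A `<=` ~` [set 0] by move=> x Ax x0; apply: h; rewrite -x0.
have := pr_le mu mA (measurableC m0) sub; rewrite prC // po; lra.
Qed.


Lemma L_full S G : measurable S -> measurable G -> pP G = 1 -> pP S = pP (S `&` G).
Proof.
move=> mS mG pG.
have mGC : measurable (~` G) by exact: measurableC.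
have e : S = (S `&` G) `|` (S `&` ~` G) by rewrite -setIUr setUv setIT.
have dis : (S `&` G) `&` (S `&` ~` G) = set0.
  by apply/seteqP; split => // w [[_ ?] [_ ?]].
rewrite {1}e prU //; try exact: measurableI.
have mSG : measurable (S `&` ~` G) by exact: measurableI.
have : pP (S `&` ~` G) <= pP (~` G) by apply: pr_le => // w [].
rewrite prC // pG subrr => h.
have h0 := pr_ge0 P (S `&` ~` G).
lra.
Qed.

Lemma L_split S C D : measurable S -> measurable C -> measurable D ->
  C `&` D = set0 -> pP (S `&` (C `|` D)) = pP (S `&` C) + pP (S `&` D).
Proof.
move=> mS mC mD dis; rewrite setIUr prU //; try exact: measurableI.
apply/seteqP; split => // w [[_ ?] [_ ?]].
by have : (C `&` D) w by []; rewrite dis.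
Qed.

Lemma L_const (Y : Omega -> borelType X) (A : set (borelType X)) C v :
  measurable C -> (forall w, C w -> Y w = v) ->
  pP (Y @^-1` A `&` C) = (v \in A)%:R * pP C.
Proof.
move=> mC hC; case: (pselect (A v)) => h.
  rewrite mem_set // mul1r; congr (pr P _); apply/seteqP; split => w.
    by case.
  by move=> Cw; split => //=; rewrite hC.
rewrite memNset // mul0r.
have -> : Y @^-1` A `&` C = set0.
  by apply/seteqP; split => // w [/= Yw Cw]; apply: h; rewrite -(hC w Cw).
exact: pr0.
Qed.

Lemma dir2 : (exists x0 : borelType X, forall A : set (borelType X), measurable A ->
   mu A = ((2^-1)%R%:E * (@dirac _ _ x0 R A + @dirac _ _ (- x0)%R R A))%E) ->
  identically_distributed P Y1 Y2.
Proof.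
move=> [x0 hmu] A mA.
have pmu B : measurable B -> pm B = 2^-1 * ((x0 \in B)%:R + ((- x0) \in B)%:R).
  by move=> mB; rewrite /pr hmu // !diracE -EFinD -EFinM.
have mY1 : measurable (Y1 @^-1` A) by exact: (mpre (meas_Y1 hbo hbb m1 ma) mA).
have mY2 : measurable (Y2 @^-1` A) by exact: (mpre (meas_add hbo hbb m1 m2) mA).
rewrite !prE //; congr EFin.
have m0 : measurable ([set 0] : set (borelType X)) by exact: set0_meas.
have [x00|xn0] := eqVneq x0 0.
  have p0 : pm [set 0] = 1.
    rewrite pmu // x00 oppr0 mem_set //=; lra.
  pose G := xi1 @^-1` [set 0] `&` xi2 @^-1` [set 0].
  have mG : measurable G by apply: measurableI; apply: mpre.
  have pG : pP G = 1 by rewrite /G prod_rule // p0 mulr1.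
  rewrite (L_full mY1 mG pG) (L_full mY2 mG pG).
  rewrite (@L_const Y1 A G 0 mG); last first.
    by move=> w [/= e _]; rewrite /Y1 e mul0rn.
  rewrite (@L_const Y2 A G 0 mG) //.
  by move=> w [/= e1 e2]; rewrite /Y2 e1 e2 addr0.
have xn : x0 != - x0.
  apply/eqP => e; move/eqP: xn0; apply; apply: (no2tors nc).
  by rewrite {2}e subrr.
have mx : measurable ([set x0] : set (borelType X)) by exact: set0_meas.
have mnx : measurable ([set - x0] : set (borelType X)) by exact: set0_meas.
have px : pm [set x0] = 2^-1.
  have h : ~ [set x0] (- x0) by move=> /= e; move/eqP: xn; apply.
  rewrite pmu // (@mem_set _ [set x0] x0) // (memNset h) /=; lra.
have pnx : pm [set - x0] = 2^-1.
  have h : ~ [set - x0] x0 by move=> /= e; move/eqP: xn; apply.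
  rewrite pmu // (@mem_set _ [set - x0] (- x0)) // (memNset h) /=; lra.
have ma0 := alpha_meas 0; have ma1 := alpha_meas 1.
pose C0 := alpha @^-1` [set 0%N].
pose C1 := alpha @^-1` [set 1%N] `&` xi1 @^-1` [set x0].
pose C2 := alpha @^-1` [set 1%N] `&` xi1 @^-1` [set - x0].
have mC1 : measurable C1 by apply: measurableI => //; apply: mpre.
have mC2 : measurable C2 by apply: measurableI => //; apply: mpre.
have pC0 : pP C0 = 2^-1 by rewrite /pr pa0.
have pa1' : pP (alpha @^-1` [set 1%N]) = 2^-1 by rewrite /pr pa1.
have pC1 : pP C1 = 2^-1 * 2^-1 by rewrite /C1 prod_rule_a // pa1' px.
have pC2 : pP C2 = 2^-1 * 2^-1 by rewrite /C2 prod_rule_a // pa1' pnx.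
have d01 : C0 `&` C1 = set0.
  by apply/seteqP; split => // w [/= e [/= e' _]]; rewrite e in e'.
have d012 : (C0 `|` C1) `&` C2 = set0.
  apply/seteqP; split => // w [[/= e|[_ /= e]] [/= e' e2]].
    by rewrite e in e'.
  by move/eqP: xn; apply; rewrite -e2 e.
have mC01 : measurable (C0 `|` C1) by exact: measurableU.
have pG1 : pP (C0 `|` C1 `|` C2) = 1.
  rewrite prU // prU // pC0 pC1 pC2; lra.
rewrite (L_full mY1 (measurableU _ _ mC01 mC2) pG1).
rewrite L_split // L_split //.
rewrite (@L_const Y1 A C0 0) //; last first.
  by move=> w /= e; rewrite /Y1 e muln0 mulr0n.
rewrite (@L_const Y1 A C1 (x0 *+ 2)) //; last first.
  by move=> w [/= e1 e2]; rewrite /Y1 e1 e2.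
rewrite (@L_const Y1 A C2 ((- x0) *+ 2)) //; last first.
  by move=> w [/= e1 e2]; rewrite /Y1 e1 e2.
pose D s t := xi1 @^-1` [set s] `&` xi2 @^-1` [set t].
have mD s t : measurable (D s t) by apply: measurableI; apply: mpre => //; exact: set0_meas.
have pD s t : pm [set s] = 2^-1 -> pm [set t] = 2^-1 -> pP (D s t) = 2^-1 * 2^-1.
  by move=> ps pt; rewrite /D prod_rule ?ps ?pt //; exact: set0_meas.
have dD s t s' t' : (s != s') || (t != t') -> D s t `&` D s' t' = set0.
  move=> h; apply/seteqP; split => // w [[/= e1 e2] [/= e3 e4]].
  by move: h; rewrite -e1 -e2 -e3 -e4 !eqxx.
have dU s t s' t' s'' t'' : (s != s'') || (t != t'') -> (s' != s'') || (t' != t'') ->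
    (D s t `|` D s' t') `&` D s'' t'' = set0.
  move=> h1 h2; rewrite setIUl (dD _ _ _ _ h1) (dD _ _ _ _ h2); exact: setU0.
have nx : - x0 != x0 by rewrite eq_sym.
pose G2 := D x0 x0 `|` D x0 (- x0) `|` D (- x0) x0 `|` D (- x0) (- x0).
have pG2 : pP G2 = 1.
  rewrite /G2 prU //; last 2 first.
  - by repeat apply: measurableU.
  - rewrite setIUl (dU _ _ _ _ _ _ _ _) ?nx ?xn ?orbT //.
    by rewrite (dD _ _ _ _ _) ?nx ?xn ?orbT // set0U.
  rewrite prU //; last 2 first.
  - exact: measurableU.
  - by rewrite (dU _ _ _ _ _ _ _ _) ?nx ?xn ?orbT.
  rewrite prU //; last by rewrite (dD _ _ _ _ _) ?nx ?xn ?orbT.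
  rewrite !pD //; lra.
have mG2 : measurable G2 by repeat apply: measurableU.
rewrite (L_full mY2 mG2 pG2) /G2.
rewrite L_split //; last 2 first.
  - by repeat apply: measurableU.
  - rewrite setIUl (dU _ _ _ _ _ _ _ _) ?nx ?xn ?orbT //.
    by rewrite (dD _ _ _ _ _) ?nx ?xn ?orbT // set0U.
rewrite L_split //; last 2 first.
  - exact: measurableU.
  - by rewrite (dU _ _ _ _ _ _ _ _) ?nx ?xn ?orbT.
rewrite L_split //; last by rewrite (dD _ _ _ _ _) ?nx ?xn ?orbT.
rewrite (@L_const Y2 A (D x0 x0) (x0 *+ 2)) //; last first.
  by move=> w [/= e1 e2]; rewrite /Y2 e1 e2 mulr2n.
rewrite (@L_const Y2 A (D x0 (- x0)) 0) //; last first.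
  by move=> w [/= e1 e2]; rewrite /Y2 e1 e2 subrr.
rewrite (@L_const Y2 A (D (- x0) x0) 0) //; last first.
  by move=> w [/= e1 e2]; rewrite /Y2 e1 e2 addNr.
rewrite (@L_const Y2 A (D (- x0) (- x0)) ((- x0) *+ 2)) //; last first.
  by move=> w [/= e1 e2]; rewrite /Y2 e1 e2 mulr2n.
rewrite !pD // pC0 pC1 pC2; lra.
Qed.

End Main.

Unset Implicit Arguments.

Theorem theorem4p2 (R : realType) (X : topologicalZmodType)
  (d0 : measure_display) (Omega : measurableType d0) (P : probability Omega R)
  (xi1 xi2 : Omega -> borelType X) (alpha : Omega -> nat)
  (mu : probability (borelType X) R) :
  hausdorff_space X ->
  locally_compact [set: X] ->
  @second_countable X ->
  no_nonzero_compact_subgroup X ->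
  measurable_fun setT xi1 -> measurable_fun setT xi2 ->
  measurable_fun setT alpha ->
  has_distribution P xi1 mu -> has_distribution P xi2 mu ->
  independent_rv P xi1 xi2 ->
  symmetric_measure mu ->
  P (alpha @^-1` [set 0%N]) = (2^-1)%:E ->
  P (alpha @^-1` [set 1%N]) = (2^-1)%:E ->
  independent_rv P alpha (fun w => (xi1 w, xi2 w)) ->
  (identically_distributed P (fun w => xi1 w *+ (2 * alpha w)%N)
                             (fun w => xi1 w + xi2 w)
   <-> exists x0 : borelType X, forall A : set (borelType X), measurable A ->
         mu A = ((2^-1)%R%:E * (@dirac _ _ x0 R A + @dirac _ _ (- x0)%R R A))%E).
Proof.
move=> hX lc sc nc m1 m2 ma d1 d2 ind12 sym pa0 pa1 inda.
have [b [hbo hbb]] := base_seq sc.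
split.
- move=> idd.
  exact: (dir1 hX nc m1 m2 ma d1 d2 ind12 sym pa0 pa1 inda hbo hbb idd).
- move=> h.
  exact: (dir2 hX nc m1 m2 ma d1 d2 ind12 pa0 pa1 inda hbo hbb h).
Qed.
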